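(* Let $\mathcal{LS}_{\mathfrak{A}_2}$ be the operad (variety) of left-symmetric algebras over a field of characteristic $0$ satisfying the identity $a(bc)+b(ac)+a(cb)+c(ab)+b(ca)+c(ba)=0$. Its Koszul dual operad $\mathcal{LS}_{\mathfrak{A}_2}^{(!)}$ is the operad of alternative algebras satisfying the identity $(ab)c=(ba)c$.
   Context: A left-symmetric algebra is an algebra whose associator $(a,b,c)=(ab)c-a(bc)$ satisfies $(a,b,c)=(b,a,c)$. An algebra is alternative if $(a,a,b)=0=(a,b,b)$. The Koszul dual of a binary quadratic operad is taken in the sense of Ginzburg–Kapranov; equivalently, $\mathcal{P}^{(!)}$ is the quadratic operad whose algebras $U$ are defined by exactly those degree-3 identities making $S\otimes U$, with product $(a\otimes u)(b\otimes v)=ab\otimes uv$, Lie-admissible for every $\mathcal{P}$-algebra $S$. *)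

(* Defs.v *)
From HB Require Import structures.
From mathcomp Require Import all_boot all_order all_algebra all_fingroup.
Set Implicit Arguments. Unset Strict Implicit. Unset Printing Implicit Defensive.
Import GRing.Theory.
Local Open Scope ring_scope.

(* Multilinear degree-3 nonassociative monomials in the variables x_0,x_1,x_2:
   (s, true)  stands for (x_{s 0} x_{s 1}) x_{s 2},
   (s, false) stands for x_{s 0} (x_{s 1} x_{s 2}).
   A degree-3 (multilinear, binary quadratic) identity is a K-linear
   combination of these 12 monomials, i.e. a function mon -> K. *)
Definition mon := ('S_3 * bool)%type.

Section Identities.
Variable K : fieldType.

Definition x0 : 'I_3 := inord 0.
Definition x1 : 'I_3 := inord 1.
Definition x2 : 'I_3 := inord 2.

Definition mono (b : bool) (i j k : 'I_3) : mon -> K :=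
  fun m => if [&& m.2 == b, m.1 x0 == i, m.1 x1 == j & m.1 x2 == k]
           then 1 else 0.
Definition Lm := mono true.
Definition Rm := mono false.

Definition addI (f g : mon -> K) : mon -> K := fun m => f m + g m.
Definition oppI (f : mon -> K) : mon -> K := fun m => - f m.
Definition subI f g := addI f (oppI g).

Definition assoc3 (i j k : 'I_3) := subI (Lm i j k) (Rm i j k).

(* substitution x_i |-> x_{t i} in an identity *)
Definition act (t : 'S_3) (g : mon -> K) : mon -> K :=
  fun m => g (m.1 * t^-1, m.2)%g.

Definition Sspan (gs : seq (mon -> K)) (f : mon -> K) : Prop :=
  exists c : nat -> 'S_3 -> K, forall m : mon,
    f m = \sum_(i < size gs) \sum_(t : 'S_3)
             c i t * act t (nth (fun _ => 0) gs i) m.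

(* sign in the Jacobi expansion of S (x) U:
   J(a(x)u, b(x)v, c(x)w) = sum_s sgn s [ (..)..(x)(..).. - .(..)(x).(..) ] *)
Definition eps (m : mon) : K :=
  (if m.2 then 1 else -1) * (-1) ^+ odd_perm m.1.

Definition pairing (f g : mon -> K) : K := \sum_(m : mon) eps m * f m * g m.

(* Koszul dual (Ginzburg-Kapranov), with sign convention fixed by
   Lie-admissibility of S (x) U: relations of P^(!) = orthogonal of R_P. *)
Definition koszul_dual_rel (R : (mon -> K) -> Prop) (f : mon -> K) : Prop :=
  forall g, R g -> pairing f g = 0.

Definition LS_id := subI (assoc3 x0 x1 x2) (assoc3 x1 x0 x2).
Definition A2_id :=
  addI (Rm x0 x1 x2) (addI (Rm x1 x0 x2) (addI (Rm x0 x2 x1)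
   (addI (Rm x2 x0 x1) (addI (Rm x1 x2 x0) (Rm x2 x1 x0))))).
Definition LS_A2_rel := Sspan [:: LS_id; A2_id].

(* alternative (linearized): (a,b,c)+(b,a,c) = 0, (a,b,c)+(a,c,b) = 0 *)
Definition altL_id := addI (assoc3 x0 x1 x2) (assoc3 x1 x0 x2).
Definition altR_id := addI (assoc3 x0 x1 x2) (assoc3 x0 x2 x1).
Definition lcomm_id := subI (Lm x0 x1 x2) (Lm x1 x0 x2).
Definition Alt_lcomm_rel := Sspan [:: altL_id; altR_id; lcomm_id].

End Identities.

(* Main.v *)
Require Import Defs.
From mathcomp Require Import all_boot all_order all_algebra all_fingroup.
From mathcomp Require Import ring.
Set Implicit Arguments. Unset Strict Implicit. Unset Printing Implicit Defensive.
Import GRing.Theory.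
Local Open Scope ring_scope.

Definition NT := (nat * nat * nat)%type.
Definition ntr (s : 'S_3) : NT := (nat_of_ord (s x0), nat_of_ord (s x1), nat_of_ord (s x2)).
Definition p1 : 'S_3 := 1%g.
Definition p2 : 'S_3 := tperm x0 x1.
Definition p3 : 'S_3 := tperm x0 x2.
Definition p4 : 'S_3 := tperm x1 x2.
Definition p5 : 'S_3 := (tperm x0 x1 * tperm x1 x2)%g.
Definition p6 : 'S_3 := (tperm x0 x1 * tperm x0 x2)%g.
Definition plist := [:: p1; p2; p3; p4; p5; p6].
Definition nctr : seq NT :=
  [:: (0,1,2); (1,0,2); (2,1,0); (0,2,1); (2,0,1); (1,2,0)]%N.

Lemma v0 : nat_of_ord x0 = 0%N. Proof. by rewrite /x0 inordK. Qed.
Lemma v1 : nat_of_ord x1 = 1%N. Proof. by rewrite /x1 inordK. Qed.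
Lemma v2 : nat_of_ord x2 = 2%N. Proof. by rewrite /x2 inordK. Qed.
Lemma e01 : (x0 == x1) = false. Proof. by apply/eqP => /(congr1 (@nat_of_ord 3)); rewrite v0 v1. Qed.
Lemma e02 : (x0 == x2) = false. Proof. by apply/eqP => /(congr1 (@nat_of_ord 3)); rewrite v0 v2. Qed.
Lemma e12 : (x1 == x2) = false. Proof. by apply/eqP => /(congr1 (@nat_of_ord 3)); rewrite v1 v2. Qed.
Lemma e10 : (x1 == x0) = false. Proof. by rewrite eq_sym e01. Qed.
Lemma e20 : (x2 == x0) = false. Proof. by rewrite eq_sym e02. Qed.
Lemma e21 : (x2 == x1) = false. Proof. by rewrite eq_sym e12. Qed.

Lemma map_ntr : map ntr plist = nctr.
Proof.
rewrite /= /ntr /p1 /p2 /p3 /p4 /p5 /p6 !permM !perm1 !permE /=.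
by rewrite !eqxx ?e01 ?e02 ?e12 ?e10 ?e20 ?e21 /= ?eqxx ?e01 ?e02 ?e12 ?e10 ?e20 ?e21 /= !v0 !v1 !v2.
Qed.

Lemma map_odd : map (@odd_perm _) plist = [:: false; true; true; true; false; false].
Proof.
by rewrite /= /p1 /p2 /p3 /p4 /p5 /p6 !odd_permM !odd_tperm odd_perm1 e01 e02 e12.
Qed.

Lemma ord3 (x : 'I_3) : x = x0 \/ x = x1 \/ x = x2.
Proof.
case: x => [[|[|[|n]]] H] //.
- by left; apply: val_inj; rewrite /= v0.
- by right; left; apply: val_inj; rewrite /= v1.
- by right; right; apply: val_inj; rewrite /= v2.
Qed.

Lemma ntr_inj : injective ntr.
Proof.
move=> s t [h0 h1 h2]; apply/permP => x.
by case: (ord3 x) => [->|[->|->]]; apply: val_inj.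
Qed.

Lemma uniq_ntr (s : 'S_3) : uniq [:: (ntr s).1.1; (ntr s).1.2; (ntr s).2].
Proof.
rewrite /= !inE !val_eqE !(inj_eq perm_inj) e01 e02 e12 //.
Qed.

Lemma ntr_lt (s : 'S_3) : [/\ (ntr s).1.1 < 3, (ntr s).1.2 < 3 & (ntr s).2 < 3]%N.
Proof. by rewrite /= !ltn_ord. Qed.

Lemma nctr_check : all (fun a => all (fun b => all (fun c =>
   uniq [:: a; b; c] ==> ((a, b, c) \in nctr)) (iota 0 3)) (iota 0 3)) (iota 0 3).
Proof. by vm_compute. Qed.

Lemma plist_all (s : 'S_3) : s \in plist.
Proof.
have: ntr s \in nctr.
  case: (ntr_lt s) (uniq_ntr s) => ha hb hc.
  move: nctr_check => /allP /(_ (ntr s).1.1); rewrite mem_iota ha => /(_ isT).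
  move=> /allP /(_ (ntr s).1.2); rewrite mem_iota hb => /(_ isT).
  move=> /allP /(_ (ntr s).2); rewrite mem_iota hc => /(_ isT).
  by move=> /implyP H /H; case: (ntr s) => [[]].
by rewrite -map_ntr (mem_map ntr_inj).
Qed.

Lemma plist_uniq : uniq plist.
Proof. by rewrite -(map_inj_uniq ntr_inj) map_ntr. Qed.
Lemma sumS3 (R : nmodType) (F : 'S_3 -> R) : \sum_(s : 'S_3) F s = \sum_(s <- plist) F s.
Proof.
rewrite -big_enum /=; apply: perm_big.
apply: uniq_perm; [exact: enum_uniq | exact: plist_uniq |].
by move=> s; rewrite mem_enum plist_all.
Qed.

Definition pof (t : NT) : 'S_3 := nth 1%g plist (index t nctr).

Lemma pof_ntr s : pof (ntr s) = s.
Proof.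
by rewrite /pof -map_ntr (index_map ntr_inj) nth_index // plist_all.
Qed.

Lemma ntr_pof t : t \in nctr -> ntr (pof t) = t.
Proof. by rewrite -map_ntr => /mapP [s _ ->]; rewrite pof_ntr. Qed.

Definition slots : seq (NT * bool) := [seq (t, b) | t <- nctr, b <- [:: true; false]].

Lemma slotsP x : x \in slots -> x.1 \in nctr.
Proof. by case/allpairsP => [[t b] [/= Ht _ ->]]. Qed.

Lemma slots_mem (s : 'S_3) (b : bool) : (ntr s, b) \in slots.
Proof.
apply/allpairsP; exists (ntr s, b) => /=; split => //.
  by rewrite -map_ntr map_f // plist_all.
by case: b.
Qed.

Lemma slots_uniq : uniq slots.
Proof. by vm_compute. Qed.

Section KS.
Variable K : fieldType.

Lemma sum_mon (F : mon -> K) :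
  \sum_(m : mon) F m = \sum_(x <- slots) F (pof x.1, x.2).
Proof.
have -> : \sum_(m : mon) F m = \sum_(s : 'S_3) \sum_(b : bool) F (s, b).
  by rewrite pair_big; apply: eq_bigr => -[].
rewrite sumS3.
rewrite (eq_bigr (fun s => \sum_(b <- [:: true; false]) F (pof (ntr s), b))); last first.
  by move=> s _; rewrite big_bool !big_cons big_nil addr0 pof_ntr.
rewrite -(big_map ntr xpredT (fun t => \sum_(b <- [:: true; false]) F (pof t, b))).
by rewrite map_ntr big_allpairs.
Qed.

End KS.
Definition monoZ (b : bool) (i j k : nat) (t : NT) (b' : bool) : int :=
  if [&& b' == b, t.1.1 == i, t.1.2 == j & t.2 == k] then 1 else 0.
Definition LmZ := monoZ true.
Definition RmZ := monoZ false.
Definition assocZ i j k t b := LmZ i j k t b + - RmZ i j k t b.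
Definition LSZ (u : NT) t b :=
  assocZ u.1.1 u.1.2 u.2 t b + - assocZ u.1.2 u.1.1 u.2 t b.
Definition A2Z (u : NT) t b :=
  let: i := u.1.1 in let: j := u.1.2 in let: k := u.2 in
  RmZ i j k t b + (RmZ j i k t b + (RmZ i k j t b +
   (RmZ k i j t b + (RmZ j k i t b + RmZ k j i t b)))).
Definition altLZ (u : NT) t b :=
  assocZ u.1.1 u.1.2 u.2 t b + assocZ u.1.2 u.1.1 u.2 t b.
Definition altRZ (u : NT) t b :=
  assocZ u.1.1 u.1.2 u.2 t b + assocZ u.1.1 u.2 u.1.2 t b.
Definition lcZ (u : NT) t b :=
  LmZ u.1.1 u.1.2 u.2 t b + - LmZ u.1.2 u.1.1 u.2 t b.
Definition genAltZ (i : nat) := match i with 0 => altLZ | 1 => altRZ | _ => lcZ end.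
Definition genLSZ (i : nat) := match i with 0 => LSZ | _ => A2Z end.

Definition oddZ (t : NT) : bool :=
  (t.1.2 < t.1.1)%N (+) (t.2 < t.1.1)%N (+) (t.2 < t.1.2)%N.
Definition epsZ (t : NT) (b : bool) : int :=
  (if b then 1 else -1) * (if oddZ t then -1 else 1).

Section KS2.
Variable K : fieldType.

Lemma mono_Z b i j k (m : mon) :
  mono K b i j k m = (monoZ b i j k (ntr m.1) m.2)%:~R.
Proof.
rewrite /mono /monoZ /ntr /= -!val_eqE /=.
by case: ifP.
Qed.

Lemma monoZ_act b (i j k : 'I_3) (p s : 'S_3) b' :
  monoZ b i j k (ntr (p * s^-1)%g) b' = monoZ b (s i) (s j) (s k) (ntr p) b'.
Proof.
rewrite /monoZ /ntr /= !permM.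
have E (x y : 'I_3) : (nat_of_ord (s^-1%g x) == nat_of_ord y) = (nat_of_ord x == nat_of_ord (s y)).
  by rewrite !val_eqE (canF_eq (permKV s)).
by rewrite !E.
Qed.

Lemma act_alt (i : 'I_3) (s : 'S_3) (m : mon) :
  Defs.act s (nth (fun _ => 0) [:: altL_id K; altR_id K; lcomm_id K] i) m =
  (genAltZ i (ntr s) (ntr m.1) m.2)%:~R.
Proof.
case: i => [[|[|[|//]]] Hi] /=;
rewrite /Defs.act /altL_id /altR_id /lcomm_id /assoc3 /subI /addI /oppI /Lm /Rm !mono_Z /= !monoZ_act;
by rewrite /altLZ /altRZ /lcZ /assocZ /LmZ /RmZ !(intrD, intrN).
Qed.

Lemma act_ls (i : 'I_2) (s : 'S_3) (m : mon) :
  Defs.act s (nth (fun _ => 0) [:: LS_id K; A2_id K] i) m =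
  (genLSZ i (ntr s) (ntr m.1) m.2)%:~R.
Proof.
case: i => [[|[|//]] Hi] /=;
rewrite /Defs.act /LS_id /A2_id /assoc3 /subI /addI /oppI /Lm /Rm !mono_Z /= !monoZ_act;
by rewrite /LSZ /A2Z /assocZ /LmZ /RmZ !(intrD, intrN).
Qed.

Lemma eps_Z (s : 'S_3) b : eps K (s, b) = (epsZ (ntr s) b)%:~R.
Proof.
have Hs := plist_all s.
rewrite -(nth_index 1%g Hs).
have : (index s plist < 6)%N by rewrite -[6%N]/(size plist) index_mem.
move: (index s plist) => k hk.
rewrite /eps /= -(nth_map 1%g (0%N,0%N,0%N)) // -(nth_map 1%g false (@odd_perm _)) // map_odd map_ntr.
rewrite /epsZ.
by case: k hk => [|[|[|[|[|[|//]]]]]] _ /=; case: b => /=;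
  rewrite ?(intrM, intrN) /= ?expr0 ?expr1 ?mulr1 ?mul1r ?mulrN ?mulNr ?opprK.
Qed.

End KS2.
Definition sumL {T} (l : seq T) (F : T -> int) : int := foldr (fun x r => F x + r) 0 l.

Lemma check1 : all (fun u => all (fun v => all (fun i => all (fun j =>
  sumL slots (fun x => genAltZ i u x.1 x.2 * (epsZ x.1 x.2 * genLSZ j v x.1 x.2)) == 0)
  [:: 0; 1]%N) [:: 0; 1; 2]%N) nctr) nctr.
Proof. by vm_compute. Qed.

Lemma nctr_mem s : ntr s \in nctr.
Proof. by rewrite -map_ntr map_f // plist_all. Qed.

Section KS3.
Variable K : fieldType.

Lemma intr_sumL T (l : seq T) F : (sumL l F)%:~R = \sum_(x <- l) (F x)%:~R :> K.
Proof. elim: l => [|x l IH]; first by rewrite big_nil. by rewrite big_cons /= intrD IH. Qed.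

Lemma pairing_ext (f f' g g' : mon -> K) :
  (forall m, f m = f' m) -> (forall m, g m = g' m) -> pairing f g = pairing f' g'.
Proof. by move=> Hf Hg; apply: eq_bigr => m _; rewrite Hf Hg. Qed.

Lemma pairing_lin (F : mon -> K) (a : NT -> bool -> int) :
  pairing F (fun m => (a (ntr m.1) m.2)%:~R) =
  \sum_(x <- slots) F (pof x.1, x.2) * (epsZ x.1 x.2 * a x.1 x.2)%:~R.
Proof.
rewrite /pairing sum_mon big_seq_cond [RHS]big_seq_cond; apply: eq_bigr => x /andP [hx _].
rewrite /= eps_Z ntr_pof ?(slotsP hx) // intrM; ring.
Qed.

Lemma pair_gen (i : 'I_3) (j : 'I_2) t s :
  pairing (Defs.act t (nth (fun _ => 0) [:: altL_id K; altR_id K; lcomm_id K] i))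
          (Defs.act s (nth (fun _ => 0) [:: LS_id K; A2_id K] j)) = 0.
Proof.
rewrite (pairing_ext (f' := fun m => (genAltZ i (ntr t) (ntr m.1) m.2)%:~R)
   (g' := fun m => (genLSZ j (ntr s) (ntr m.1) m.2)%:~R)); last 2 first.
- by move=> m; rewrite act_alt.
- by move=> m; rewrite act_ls.
rewrite pairing_lin big_seq_cond.
rewrite (eq_bigr (fun x => (genAltZ i (ntr t) x.1 x.2 * (epsZ x.1 x.2 * genLSZ j (ntr s) x.1 x.2))%:~R)); last first.
  move=> x /andP [hx _]; by rewrite /= ntr_pof ?(slotsP hx) // [RHS]intrM.
rewrite -big_seq_cond -intr_sumL.
have Hi : (nat_of_ord i \in [:: 0; 1; 2]%N) by case: i => [[|[|[|]]]].
have Hj : (nat_of_ord j \in [:: 0; 1]%N) by case: j => [[|[|]]].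
move: check1 => /allP /(_ _ (nctr_mem t)) /allP /(_ _ (nctr_mem s)).
by move=> /allP /(_ _ Hi) /allP /(_ _ Hj) /eqP ->.
Qed.

Lemma pair_bil (cf : nat -> 'S_3 -> K) (A : 'I_3 -> 'S_3 -> mon -> K)
  (cg : nat -> 'S_3 -> K) (B : 'I_2 -> 'S_3 -> mon -> K) :
  (forall i t j s, pairing (A i t) (B j s) = 0) ->
  pairing (fun m => \sum_(i < 3) \sum_(t : 'S_3) cf i t * A i t m)
          (fun m => \sum_(j < 2) \sum_(s : 'S_3) cg j s * B j s m) = 0.
Proof.
move=> H; rewrite /pairing.
rewrite (eq_bigr (fun m => \sum_(i < 3) \sum_(t : 'S_3) \sum_(j < 2) \sum_(s : 'S_3)
   cf i t * cg j s * (eps K m * A i t m * B j s m))); last first.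
  move=> m _; rewrite [eps K m * _]mulr_sumr big_distrl; apply: eq_bigr => i _.
  rewrite [eps K m * _]mulr_sumr big_distrl; apply: eq_bigr => t _ /=.
  rewrite mulr_sumr; apply: eq_bigr => j _.
  rewrite mulr_sumr; apply: eq_bigr => s _ /=. ring.
rewrite exchange_big big1 // => i _.
rewrite exchange_big big1 // => t _.
rewrite exchange_big big1 // => j _.
rewrite exchange_big big1 // => s _.
by rewrite -mulr_sumr; move: (H i t j s); rewrite /pairing => ->; rewrite mulr0.
Qed.

End KS3.

Definition Ctab : seq (nat * NT * (NT * bool) * int) := [::
  (0%N, (0,1,2)%N, ((0,1,2)%N, false), (-(1)%:Z));
  (0%N, (0,1,2)%N, ((0,2,1)%N, true), (1)%:Z);
  (0%N, (0,1,2)%N, ((0,2,1)%N, false), (2)%:Z);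
  (0%N, (0,1,2)%N, ((2,0,1)%N, true), (1)%:Z);
  (0%N, (2,1,0)%N, ((2,1,0)%N, false), (-(1)%:Z));
  (0%N, (0,2,1)%N, ((0,2,1)%N, true), (1)%:Z);
  (0%N, (0,2,1)%N, ((0,2,1)%N, false), (1)%:Z);
  (0%N, (0,2,1)%N, ((2,0,1)%N, true), (1)%:Z);
  (1%N, (0,1,2)%N, ((0,2,1)%N, true), (-(1)%:Z));
  (1%N, (0,1,2)%N, ((0,2,1)%N, false), (-(2)%:Z));
  (1%N, (0,1,2)%N, ((2,0,1)%N, true), (-(1)%:Z));
  (1%N, (1,0,2)%N, ((0,1,2)%N, true), (1)%:Z);
  (1%N, (1,0,2)%N, ((0,1,2)%N, false), (2)%:Z);
  (1%N, (1,0,2)%N, ((1,0,2)%N, true), (1)%:Z);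
  (1%N, (1,0,2)%N, ((0,2,1)%N, true), (-(1)%:Z));
  (1%N, (1,0,2)%N, ((0,2,1)%N, false), (-(2)%:Z));
  (1%N, (1,0,2)%N, ((2,0,1)%N, true), (-(1)%:Z));
  (2%N, (0,1,2)%N, ((0,1,2)%N, true), (1)%:Z);
  (2%N, (0,1,2)%N, ((0,1,2)%N, false), (1)%:Z);
  (2%N, (2,1,0)%N, ((2,1,0)%N, true), (1)%:Z);
  (2%N, (2,1,0)%N, ((2,1,0)%N, false), (1)%:Z);
  (2%N, (0,2,1)%N, ((0,2,1)%N, true), (1)%:Z);
  (2%N, (0,2,1)%N, ((0,2,1)%N, false), (1)%:Z)].
Definition Mtab : seq ((NT * bool) * nat * NT * int) := [::
  (((1,0,2)%N, false), 0%N, (0,1,2)%N, (1)%:Z);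
  (((2,0,1)%N, false), 0%N, (0,2,1)%N, (-(1)%:Z));
  (((1,2,0)%N, true), 0%N, (0,1,2)%N, (-(1)%:Z));
  (((1,2,0)%N, true), 0%N, (2,1,0)%N, (-(1)%:Z));
  (((1,2,0)%N, true), 0%N, (0,2,1)%N, (-(1)%:Z));
  (((1,2,0)%N, true), 1%N, (0,1,2)%N, (1)%:Z);
  (((1,2,0)%N, false), 0%N, (0,1,2)%N, (1)%:Z);
  (((1,2,0)%N, false), 0%N, (0,2,1)%N, (1)%:Z);
  (((1,2,0)%N, false), 1%N, (0,1,2)%N, (-(1)%:Z))].

Fixpoint look {T : eqType} (k : T) (l : seq (T * int)) : int :=
  match l with [::] => 0 | kv :: l' => if kv.1 == k then kv.2 else look k l' end.
Definition Cz (i : nat) (u : NT) (x : NT * bool) : int := look (i, u, x) Ctab.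
Definition Mu (y : NT * bool) (l : nat) (u : NT) : int := look (y, l, u) Mtab.

Lemma check2 : all (fun y => all (fun x =>
   sumL [:: 0; 1; 2]%N (fun i => sumL nctr (fun u => Cz i u x * genAltZ i u y.1 y.2))
   == (if x == y then 1 else 0) -
      sumL [:: 0; 1]%N (fun l => sumL nctr (fun u =>
          Mu y l u * (epsZ x.1 x.2 * genLSZ l u x.1 x.2)))) slots) slots.
Proof. by vm_compute. Qed.

Section KS4.
Variable K : fieldType.

Lemma swap3 (fv : NT * bool -> K) (I : seq nat) (U : seq NT) (X : seq (NT * bool))
  (h : nat -> NT -> NT * bool -> int) :
  \sum_(x <- X) fv x * (sumL I (fun i => sumL U (fun u => h i u x)))%:~R =
  \sum_(i <- I) \sum_(u <- U) \sum_(x <- X) fv x * (h i u x)%:~R.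
Proof.
rewrite (eq_bigr (fun x => \sum_(i <- I) \sum_(u <- U) fv x * (h i u x)%:~R)); last first.
  move=> x _; rewrite intr_sumL mulr_sumr; apply: eq_bigr => i _.
  by rewrite intr_sumL mulr_sumr.
rewrite exchange_big; apply: eq_bigr => i _.
by rewrite exchange_big.
Qed.

Lemma sspan_gen (l : 'I_2) (s : 'S_3) :
  LS_A2_rel (Defs.act s (nth (fun _ => 0) [:: LS_id K; A2_id K] l)).
Proof.
exists (fun i t => if (i == nat_of_ord l) && (t == s) then 1 else 0) => m.
rewrite (bigD1 l) //= (bigD1 s) //= !eqxx mul1r big1 ?addr0; last first.
  by move=> t /negbTE ->; rewrite andbF mul0r.
rewrite big1 ?addr0 // => i /negbTE Hi.
by apply: big1 => t _; rewrite val_eqE Hi mul0r.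
Qed.

End KS4.

Unset Implicit Arguments.
Set Strict Implicit.

Theorem mainTheorem5 (K : fieldType) (charK0 : [pchar K] =i pred0)
  (f : mon -> K) :
  koszul_dual_rel (@LS_A2_rel K) f <-> Alt_lcomm_rel f.
Proof.
split.
- move=> Hk.
  have H0 (l : 'I_2) (u : NT) : u \in nctr ->
      \sum_(x <- slots) f (pof x.1, x.2) * (epsZ x.1 x.2 * genLSZ l u x.1 x.2)%:~R = 0.
    move=> hu; rewrite -pairing_lin -(Hk _ (@sspan_gen K l (pof u))).
    apply: pairing_ext => // m; by rewrite act_ls ntr_pof.
  exists (fun i t => \sum_(x <- slots) f (pof x.1, x.2) * (Cz i (ntr t) x)%:~R) => m.
  set y := (ntr m.1, m.2).
  set fv := fun x : NT * bool => f (pof x.1, x.2).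
  rewrite (eq_bigr (fun i : 'I_3 => \sum_(t : 'S_3) (\sum_(x <- slots) fv x * (Cz i (ntr t) x)%:~R) *
      (genAltZ i (ntr t) y.1 y.2)%:~R)); last by move=> i _; apply: eq_bigr => t _; rewrite act_alt.
  rewrite -(big_mkord xpredT (fun i => \sum_(t : 'S_3) (\sum_(x <- slots) fv x * (Cz i (ntr t) x)%:~R) *
      (genAltZ i (ntr t) y.1 y.2)%:~R)).
  rewrite (eq_bigr (fun i => \sum_(u <- nctr) \sum_(x <- slots) fv x * (Cz i u x * genAltZ i u y.1 y.2)%:~R)); last first.
    move=> i _; rewrite sumS3 -(big_map ntr xpredT (fun u => (\sum_(x <- slots) fv x * (Cz i u x)%:~R) *
      (genAltZ i u y.1 y.2)%:~R)) map_ntr.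
    apply: eq_bigr => u _; rewrite big_distrl; apply: eq_bigr => x _; by rewrite intrM mulrA.
  rewrite -swap3.
  have Hy : y \in slots := slots_mem m.1 m.2.
  rewrite big_seq_cond (eq_bigr (fun x => fv x * (if x == y then 1 else 0)%:~R - fv x *
     (sumL [:: 0; 1]%N (fun l => sumL nctr (fun u => Mu y l u * (epsZ x.1 x.2 * genLSZ l u x.1 x.2))))%:~R)); last first.
    move=> x /andP [hx _]; rewrite -mulrBr -intrB; congr (_ * _%:~R); apply/eqP.
    by move: check2 => /allP /(_ _ Hy) /allP /(_ _ hx).
  rewrite -big_seq_cond sumrB.
  have E := (swap3 fv [:: 0; 1]%N nctr slots (fun l u x => Mu y l u * (epsZ x.1 x.2 * genLSZ l u x.1 x.2))).
  cbv beta in E; rewrite E {E}.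
  set Z := (X in _ - X).
  have -> : Z = 0.
    rewrite /Z; apply: big1_seq => l /andP [_ hl].
    apply: big1_seq => u /andP [_ hu].
    have [l' El] : exists l' : 'I_2, l = nat_of_ord l'.
      move: hl; rewrite !inE => /orP [] /eqP ->; first by exists ord0.
      by exists (@Ordinal 2 1 isT).
    rewrite El; transitivity ((Mu y l' u)%:~R *
      \sum_(x <- slots) f (pof x.1, x.2) * (epsZ x.1 x.2 * genLSZ l' u x.1 x.2)%:~R); last first.
      by rewrite (H0 l' u hu) mulr0.
    rewrite mulr_sumr; apply: eq_bigr => x _.
    rewrite intrM /fv; ring.
  rewrite subr0 (bigD1_seq y) ?slots_uniq // eqxx mulr1 big1 ?addr0.
    by rewrite /fv /y /= pof_ntr addr0 -surjective_pairing.
  by move=> x /negbTE ->; rewrite mulr0.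
- case=> c Hc g [d Hd].
  rewrite (pairing_ext Hc Hd).
  apply: (@pair_bil K c (fun (i : 'I_3) t => Defs.act t (nth (fun _ => 0) [:: altL_id K; altR_id K; lcomm_id K] i))
     d (fun (j : 'I_2) s => Defs.act s (nth (fun _ => 0) [:: LS_id K; A2_id K] j))).
  by move=> i t j s; apply: pair_gen.
Qed.
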